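(* Let $X_1,\ldots,X_n$ be independent Bernoulli random variables (each taking values in $\{0,1\}$), let $S=\sum_{i=1}^n X_i$, and let $Z$ be a Poisson random variable with mean $1$, independent of $S$. Assume that $S+Z$ has a unique mode $m_1$, and let $m_0$ be any mode of $S$. Then $$m_0\leq m_1\leq m_0+2.$$
   Context: A mode of a random variable $X$ taking values in $\{0,1,2,\ldots\}$ is any integer $m$ at which the probability mass function $k\mapsto \Pr(X=k)$ attains its maximum. The Bernoulli variables may have arbitrary (possibly different) success probabilities. *)

(* Defs.v *)
From Stdlib Require Import Reals List Arith.
Open Scope R_scope.

(* Law (pmf) of S = X_1 + ... + X_n where the X_i are independent
   Bernoulli variables with success probabilities listed in ps:
   P(S = k) computed by conditioning on the first variable. *)
Fixpoint bern_sum_pmf (ps : list R) (k : nat) : R :=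
  match ps with
  | nil => if Nat.eqb k 0 then 1 else 0
  | p :: ps' =>
      (1 - p) * bern_sum_pmf ps' k
      + p * match k with O => 0 | S k' => bern_sum_pmf ps' k' end
  end.

Definition poisson1_pmf (k : nat) : R := exp (-1) / INR (fact k).

Definition conv_pmf (f g : nat -> R) (k : nat) : R :=
  sum_f_R0 (fun j => f j * g (k - j)%nat) k.

Definition is_mode (f : nat -> R) (m : nat) : Prop :=
  forall k : nat, f k <= f m.

(* Main.v *)
Require Import Defs.
From Stdlib Require Import Reals List Arith Lra Lia Psatz.
Open Scope R_scope.

Definition prev (f : nat -> R) (k : nat) : R :=
  match k with O => 0 | S k' => f k' end.
Definition step (p : R) (f : nat -> R) (k : nat) : R := (1 - p) * f k + p * prev f k.
Fixpoint gen (ps : list R) (f : nat -> R) : nat -> R :=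
  match ps with nil => f | p :: ps' => step p (gen ps' f) end.
Definition d0 (k : nat) : R := if Nat.eqb k 0 then 1 else 0.
Definition bnd (p : R) : Prop := 0 <= p <= 1.

Lemma bern_gen : forall ps k, bern_sum_pmf ps k = gen ps d0 k.
Proof.
  induction ps as [|p ps IH]; intro k; simpl.
  - reflexivity.
  - unfold step, prev. rewrite IH. destruct k; [reflexivity| rewrite IH; reflexivity].
Qed.

Lemma step_ext : forall p f g, (forall k, f k = g k) -> forall k, step p f k = step p g k.
Proof. intros p f g H k. unfold step, prev. destruct k; rewrite !H; reflexivity. Qed.

Lemma gen_ext : forall ps f g, (forall k, f k = g k) -> forall k, gen ps f k = gen ps g k.
Proof.
  induction ps as [|p ps IH]; intros f g H k; simpl; [apply H|].
  apply step_ext. intro; apply IH; exact H.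
Qed.

Lemma gen_zero : forall ps k, gen ps (fun _ => 0) k = 0.
Proof.
  induction ps as [|p ps IH]; intro k; simpl; [reflexivity|].
  unfold step, prev. destruct k; rewrite !IH; ring.
Qed.

Lemma step_comm : forall p q a k, step p (step q a) k = step q (step p a) k.
Proof. intros. unfold step, prev. destruct k; ring. Qed.

Definition NLC (f : nat -> R) : Prop :=
  (forall k, 0 <= f k) /\
  (forall i j, (i <= j)%nat -> prev f i * f (S j) <= f i * f j).

Lemma prev_nonneg : forall f, (forall k, 0 <= f k) -> forall k, 0 <= prev f k.
Proof. intros f H k. destruct k; simpl; [lra| apply H]. Qed.

Lemma step_NLC : forall p a, bnd p -> NLC a -> NLC (step p a).
Proof.
  intros p a [Hp0 Hp1] [Hn Hlc]. split.
  - intro k. unfold step. pose proof (prev_nonneg a Hn k). pose proof (Hn k). nra.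
  - intros i j Hij. destruct i as [|i'].
    + simpl. assert (0 <= step p a 0 * step p a j).
      { apply Rmult_le_pos; unfold step; pose proof (prev_nonneg a Hn 0);
        pose proof (prev_nonneg a Hn j); pose proof (Hn 0%nat); pose proof (Hn j); nra. }
      lra.
    + destruct j as [|j']; [lia|].
      simpl prev. unfold step. simpl prev.
      assert (L1 := Hlc (S i') (S j') ltac:(lia)). simpl prev in L1.
      assert (L3 := Hlc i' j' ltac:(lia)).
      assert (M : prev a i' * a (S (S j')) <= a (S i') * a j').
      { assert (H2 := Hlc i' (S j') ltac:(lia)).
        destruct (Nat.eq_dec i' j') as [->|Hne]; [lra|].
        assert (H4 := Hlc (S i') j' ltac:(lia)). simpl prev in H4. lra. }
      set (P := prev a i') in *.
      assert (E : (1 - p) * a (S i') * ((1 - p) * a (S j') + p * a j') + p * a i' * ((1 - p) * a (S j') + p * a j')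
        - ((1 - p) * a i' + p * P) * ((1 - p) * a (S (S j')) + p * a (S j'))
        = (1-p)*(1-p) * (a (S i') * a (S j') - a i' * a (S (S j')))
          + p*(1-p) * (a (S i') * a j' - P * a (S (S j')))
          + p*p * (a i' * a j' - P * a (S j'))) by ring.
      assert (0 <= (1-p)*(1-p) * (a (S i') * a (S j') - a i' * a (S (S j')))
          + p*(1-p) * (a (S i') * a j' - P * a (S (S j')))
          + p*p * (a i' * a j' - P * a (S j'))).
      { repeat apply Rplus_le_le_0_compat; apply Rmult_le_pos; nra. }
      nra.
Qed.

Lemma gen_NLC : forall ps f, Forall bnd ps -> NLC f -> NLC (gen ps f).
Proof.
  induction ps as [|p ps IH]; intros f Hb Hf; simpl; [exact Hf|].
  inversion Hb; subst. apply step_NLC; auto.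
Qed.
Definition sumL (L : list (R * (nat -> R))) (F : R * (nat -> R) -> R) : R :=
  fold_right (fun x acc => F x + acc) 0 L.

Fixpoint rems (ps : list R) (f : nat -> R) : list (R * (nat -> R)) :=
  match ps with
  | nil => nil
  | p :: ps' => (p, gen ps' f) :: map (fun pa => (fst pa, step p (snd pa))) (rems ps' f)
  end.

Definition mu (ps : list R) : R := fold_right Rplus 0 ps.
Definition fstar (f : nat -> R) (j : nat) : R := (INR j + 1) * f (S j).

Lemma sumL_map : forall h L F, sumL (map h L) F = sumL L (fun x => F (h x)).
Proof. induction L; intros; simpl; [reflexivity| unfold sumL in *; simpl; rewrite IHL; reflexivity]. Qed.

Lemma sumL_le : forall L F G, (forall x, In x L -> F x <= G x) -> sumL L F <= sumL L G.
Proof.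
  induction L as [|x L IH]; intros F G H; simpl; [lra|].
  unfold sumL in *; simpl. apply Rplus_le_compat; [apply H; left; auto| apply IH; intros; apply H; right; auto].
Qed.

Lemma sumL_ext : forall L F G, (forall x, In x L -> F x = G x) -> sumL L F = sumL L G.
Proof.
  induction L as [|x L IH]; intros F G H; simpl; [reflexivity|].
  unfold sumL in *; simpl. rewrite (H x (or_introl eq_refl)), (IH F G); auto.
  intros; apply H; right; auto.
Qed.

Lemma sum_step : forall L p k,
  sumL L (fun pa => fst pa * step p (snd pa) k) =
  (1-p) * sumL L (fun pa => fst pa * snd pa k) + p * sumL L (fun pa => fst pa * prev (snd pa) k).
Proof. induction L; intros; unfold sumL in *; simpl; [ring|]. rewrite IHL. unfold step. ring. Qed.

Lemma sum_prev0 : forall L, sumL L (fun pa => fst pa * prev (snd pa) 0) = 0.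
Proof. induction L; unfold sumL in *; simpl in *; [ring|]. rewrite IHL. ring. Qed.

Lemma sum_prevS : forall L k, sumL L (fun pa => fst pa * prev (snd pa) (S k)) = sumL L (fun pa => fst pa * snd pa k).
Proof. reflexivity. Qed.

Lemma sumL_const_minus : forall L C F, sumL L (fun x => C - F x) = INR (length L) * C - sumL L F.
Proof. induction L; intros; unfold sumL in *; cbn [length fold_right]; [simpl; ring|]. rewrite IHL, S_INR. ring. Qed.

Lemma sumL_fst_mul : forall L C, sumL L (fun pa => fst pa * C) = sumL L fst * C.
Proof. induction L; intros; unfold sumL in *; simpl; [ring|]. rewrite IHL. ring. Qed.

Lemma sumL_1mfst_mul : forall L C, sumL L (fun pa => (1 - fst pa) * C) = (INR (length L) - sumL L fst) * C.
Proof. induction L; intros; unfold sumL in *; cbn [length fold_right]; [simpl; ring|]. rewrite IHL, S_INR. ring. Qed.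

Lemma rems_length : forall ps f, length (rems ps f) = length ps.
Proof. induction ps; intros; simpl; [reflexivity|]. rewrite length_map, IHps. reflexivity. Qed.

Lemma rems_fst : forall ps f, sumL (rems ps f) fst = mu ps.
Proof.
  induction ps as [|p ps IH]; intros; [reflexivity|].
  cbn [rems]. unfold sumL at 1. cbn [fold_right]. fold (sumL (map (fun pa => (fst pa, step p (snd pa))) (rems ps f)) fst).
  rewrite sumL_map. simpl. rewrite IH. reflexivity.
Qed.

Lemma rems_rel : forall ps f pa, In pa (rems ps f) -> forall k, gen ps f k = step (fst pa) (snd pa) k.
Proof.
  induction ps as [|p ps IH]; intros f pa Hin k; simpl in Hin; [contradiction|].
  destruct Hin as [<-|Hin]; [reflexivity|].
  apply in_map_iff in Hin. destruct Hin as [x [<- Hx]]. simpl.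
  rewrite (step_ext p _ _ (IH f x Hx)). apply step_comm.
Qed.

Lemma rems_prop : forall ps f, Forall bnd ps -> NLC f -> forall pa, In pa (rems ps f) -> NLC (snd pa) /\ bnd (fst pa).
Proof.
  induction ps as [|p ps IH]; intros f Hb Hf pa Hin; simpl in Hin; [contradiction|].
  inversion Hb; subst.
  destruct Hin as [<-|Hin]; [split; simpl; auto; apply gen_NLC; auto|].
  apply in_map_iff in Hin. destruct Hin as [x [<- Hx]]. simpl.
  destruct (IH f H2 Hf x Hx). split; auto. apply step_NLC; auto.
Qed.

Lemma Wid : forall ps f k,
  sumL (rems ps f) (fun pa => fst pa * snd pa k) = (INR k + 1) * gen ps f (S k) - gen ps (fstar f) k.
Proof.
  induction ps as [|p ps IH]; intros f k.
  - simpl. unfold fstar, sumL. simpl. ring.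
  - cbn [rems]. unfold sumL at 1. cbn [fold_right].
    fold (sumL (map (fun pa => (fst pa, step p (snd pa))) (rems ps f)) (fun pa => fst pa * snd pa k)).
    rewrite sumL_map. cbn [fst snd]. rewrite sum_step. cbn [gen].
    destruct k as [|k].
    + rewrite sum_prev0, IH. unfold step, prev. simpl INR. ring.
    + rewrite sum_prevS, !IH. unfold step, prev. rewrite S_INR. ring.
Qed.

Lemma Fid : forall ps f k,
  sumL (rems ps f) (fun pa => (1 - fst pa) * snd pa k) =
  (INR (length ps) - INR k) * gen ps f k + prev (gen ps (fstar f)) k.
Proof.
  intros ps f k.
  rewrite (sumL_ext _ _ (fun pa => gen ps f k - fst pa * prev (snd pa) k)).
  2:{ intros pa Hin. rewrite (rems_rel ps f pa Hin k). unfold step. ring. }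
  rewrite sumL_const_minus, rems_length.
  destruct k as [|k].
  - rewrite sum_prev0. simpl. ring.
  - rewrite sum_prevS, Wid. simpl prev. rewrite S_INR. ring.
Qed.

Lemma Fcons : forall p ps, Forall bnd (p :: ps) -> bnd p /\ Forall bnd ps.
Proof. intros p ps H; inversion H; auto. Qed.
Arguments Fcons {p ps}.

Lemma Rmult_le_0_l : forall a b, 0 <= a -> b <= 0 -> a * b <= 0.
Proof. intros; nra. Qed.

Lemma nodip : forall a m, NLC a -> a m < prev a m -> a (S m) <= a m.
Proof.
  intros a m [Hn Hlc] H. pose proof (Hlc m m (le_n m)). pose proof (Hn m).
  pose proof (Hn (S m)). nra.
Qed.

Lemma termA : forall a p g m, NLC a -> bnd p -> (forall k, g k = step p a k) ->
  g (S m) <= g m -> p * g (S m) <= p * a m.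
Proof.
  intros a p g m Ha [Hp0 Hp1] Hg H. rewrite (Hg m), (Hg (S m)) in H; rewrite ?(Hg m), ?(Hg (S m)). unfold step in *. simpl prev in *.
  destruct (Rle_lt_dec (prev a m) (a m)) as [Hle|Hlt].
  - assert ((1-p)*(a (S m) - a m) <= 0) by nra.
    assert (p*((1-p)*(a (S m) - a m)) <= 0) by (apply Rmult_le_0_l; lra). nra.
  - pose proof (nodip a m Ha Hlt).
    assert (p*((1-p)*(a (S m) - a m)) <= 0) by (apply Rmult_le_0_l; [lra| apply Rmult_le_0_l; lra]). nra.
Qed.

Lemma termB : forall a p g m, NLC a -> bnd p -> (forall k, g k = step p a k) ->
  g m <= g (S m) -> (1 - p) * g m <= (1 - p) * a m.
Proof.
  intros a p g m Ha [Hp0 Hp1] Hg H. rewrite (Hg m), (Hg (S m)) in H; rewrite ?(Hg m), ?(Hg (S m)). unfold step in *. simpl prev in *.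
  destruct (Rle_lt_dec (prev a m) (a m)) as [Hle|Hlt].
  - assert ((1-p)*(p*(prev a m - a m)) <= 0) by (apply Rmult_le_0_l; [lra| apply Rmult_le_0_l; lra]). nra.
  - pose proof (nodip a m Ha Hlt).
    assert (p*(prev a m - a m) <= 0) by nra.
    assert ((1-p)*(p*(prev a m - a m)) <= 0) by (apply Rmult_le_0_l; lra). nra.
Qed.

Lemma upper_gen : forall ps f m, Forall bnd ps -> NLC f ->
  gen ps f (S m) <= gen ps f m ->
  mu ps * gen ps f (S m) + gen ps (fstar f) m <= (INR m + 1) * gen ps f (S m).
Proof.
  intros ps f m Hb Hf H.
  assert (mu ps * gen ps f (S m) <= sumL (rems ps f) (fun pa => fst pa * snd pa m)).
  { rewrite <- (rems_fst ps f), <- sumL_fst_mul. apply sumL_le. intros pa Hin.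
    destruct (rems_prop ps f Hb Hf pa Hin). eapply termA; eauto. intro k; apply rems_rel; auto. }
  rewrite Wid in H0. lra.
Qed.

Lemma lower_gen : forall ps f m, Forall bnd ps -> NLC f ->
  gen ps f m <= gen ps f (S m) ->
  (INR (length ps) - mu ps) * gen ps f m <= (INR (length ps) - INR m) * gen ps f m + prev (gen ps (fstar f)) m.
Proof.
  intros ps f m Hb Hf H. rewrite <- Fid, <- (rems_length ps f), <- (rems_fst ps f), <- sumL_1mfst_mul.
  apply sumL_le. intros pa Hin.
  destruct (rems_prop ps f Hb Hf pa Hin). eapply termB; eauto. intro k; apply rems_rel; auto.
Qed.

Fixpoint count1 (ps : list R) : nat :=
  match ps with nil => O | p :: ps' => if Req_EM_T p 1 then S (count1 ps') else count1 ps' end.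
Fixpoint countpos (ps : list R) : nat :=
  match ps with nil => O | p :: ps' => if Req_EM_T p 0 then countpos ps' else S (countpos ps') end.

Lemma count1_le_mu : forall ps, Forall bnd ps -> INR (count1 ps) <= mu ps.
Proof.
  induction ps as [|p ps IH]; intro Hb; simpl; [lra|]. destruct (Fcons Hb) as [[Hp0 Hp1] Hbs].
  specialize (IH Hbs). unfold mu in *. simpl. destruct (Req_EM_T p 1); [rewrite S_INR|]; lra.
Qed.

Lemma mu_le_countpos : forall ps, Forall bnd ps -> mu ps <= INR (countpos ps).
Proof.
  induction ps as [|p ps IH]; intro Hb; simpl; [unfold mu; simpl; lra|]. destruct (Fcons Hb) as [[Hp0 Hp1] Hbs].
  specialize (IH Hbs). unfold mu in *. simpl. destruct (Req_EM_T p 0); [|rewrite S_INR]; lra.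
Qed.

Lemma gen_nonneg : forall ps f, Forall bnd ps -> (forall k, 0 <= f k) -> forall k, 0 <= gen ps f k.
Proof.
  induction ps as [|p ps IH]; intros f Hb Hf k; simpl; [apply Hf|].
  destruct (Fcons Hb) as [[Hp0 Hp1] Hbs]. unfold step.
  pose proof (IH f Hbs Hf k). pose proof (prev_nonneg _ (IH f Hbs Hf) k). nra.
Qed.

Lemma Z1 : forall ps f, Forall bnd ps -> (forall k, 0 <= f k) -> (forall k, f k = 0 -> f (S k) <= 0) ->
  forall k, gen ps f k = 0 -> 0 < gen ps f (S k) -> (k < count1 ps)%nat.
Proof.
  induction ps as [|p ps IH]; intros f Hb Hf Hz k H0 H1; simpl in *.
  - specialize (Hz k H0). lra.
  - destruct (Fcons Hb) as [[Hp0 Hp1] Hbs]. unfold step in *. simpl prev in H1.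
    pose proof (gen_nonneg ps f Hbs Hf) as Gn.
    destruct (Req_EM_T p 1) as [->|Hne].
    + destruct k as [|k]; [lia|]. simpl prev in H0.
      assert (Ha : gen ps f k = 0) by lra. assert (Hb2 : 0 < gen ps f (S k)) by lra.
      specialize (IH f Hbs Hf Hz k Ha Hb2). lia.
    + assert (Hp : p < 1) by lra.
      pose proof (Gn k). pose proof (prev_nonneg _ Gn k).
      assert (Hq : (1-p) * gen ps f k = 0) by nra.
      assert (Hz0 : gen ps f k = 0).
      { apply Rmult_integral in Hq. destruct Hq; [lra|assumption]. }
      assert (Hz1 : 0 < gen ps f (S k)) by (rewrite Hz0 in H1; nra).
      apply (IH f Hbs Hf Hz k Hz0 Hz1).
Qed.

Lemma Z2 : forall ps f, Forall bnd ps -> (forall k, 0 <= f k) ->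
  forall k, gen ps f (S k) = 0 -> 0 < gen ps f k -> (countpos ps <= k)%nat.
Proof.
  induction ps as [|p ps IH]; intros f Hb Hf k H0 H1; simpl in *; [lia|].
  destruct (Fcons Hb) as [[Hp0 Hp1] Hbs]. unfold step in *. simpl prev in H0.
  pose proof (gen_nonneg ps f Hbs Hf) as Gn.
  destruct (Req_EM_T p 0) as [->|Hne].
  - apply (IH f Hbs Hf k); lra.
  - assert (Hp : 0 < p) by lra.
    pose proof (Gn k). pose proof (Gn (S k)).
    assert (Hq : p * gen ps f k = 0) by nra.
    assert (Hz0 : gen ps f k = 0).
    { apply Rmult_integral in Hq. destruct Hq; [lra|assumption]. }
    destruct k as [|k]; simpl prev in H1; [rewrite Hz0 in H1; lra|].
    assert (Hz1 : 0 < gen ps f k) by (rewrite Hz0 in H1; nra).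
    specialize (IH f Hbs Hf k Hz0 Hz1). lia.
Qed.

Lemma pos_exists : forall ps f, Forall bnd ps -> (forall k, 0 <= f k) -> (exists k, 0 < f k) ->
  exists k, 0 < gen ps f k.
Proof.
  induction ps as [|p ps IH]; intros f Hb Hf He; simpl; [exact He|].
  destruct (Fcons Hb) as [[Hp0 Hp1] Hbs].
  destruct (IH f Hbs Hf He) as [k Hk]. pose proof (gen_nonneg ps f Hbs Hf) as Gn.
  unfold step. destruct (Req_EM_T p 1) as [->|Hne].
  - exists (S k). simpl prev. pose proof (Gn (S k)). nra.
  - exists k. pose proof (prev_nonneg _ Gn k). nra.
Qed.

Lemma prop_pos : forall ps f, Forall bnd ps -> (forall k, 0 <= f k) -> (forall k, 0 < f k -> 0 < f (S k)) ->
  forall k, 0 < gen ps f k -> 0 < gen ps f (S k).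
Proof.
  induction ps as [|p ps IH]; intros f Hb Hf Hp k H; simpl in *; [auto|].
  destruct (Fcons Hb) as [[Hp0 Hp1] Hbs]. pose proof (gen_nonneg ps f Hbs Hf) as Gn.
  unfold step in *. simpl prev.
  destruct (Rlt_dec 0 (gen ps f k)) as [Hk|Hk].
  - pose proof (IH f Hbs Hf Hp k Hk). pose proof (Gn (S k)).
    destruct (Req_EM_T p 0) as [->|Hne]; [lra|]. nra.
  - assert (gen ps f k = 0) by (pose proof (Gn k); lra).
    destruct k as [|k]; simpl prev in H; [rewrite H0 in H; lra|].
    assert (0 < gen ps f k) by (rewrite H0 in H; nra).
    pose proof (IH f Hbs Hf Hp k H1). lra.
Qed.

Lemma q_pos : forall k, 0 < poisson1_pmf k.
Proof. intro k. unfold poisson1_pmf. apply Rdiv_lt_0_compat; [apply exp_pos| apply INR_fact_lt_0]. Qed.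

Lemma q_S : forall k, poisson1_pmf (S k) = poisson1_pmf k / INR (S k).
Proof.
  intro k. unfold poisson1_pmf. rewrite fact_simpl, mult_INR.
  pose proof (INR_fact_lt_0 k). assert (0 < INR (S k)) by (apply lt_0_INR; lia).
  field. lra.
Qed.

Lemma q_NLC : NLC poisson1_pmf.
Proof.
  split; [intro k; left; apply q_pos|].
  intros i j Hij. destruct i as [|i]; simpl prev.
  - pose proof (q_pos 0). pose proof (q_pos j). pose proof (q_pos (S j)). nra.
  - destruct j as [|j]; [lia|].
    rewrite (q_S (S j)), (q_S i).
    pose proof (q_pos i). pose proof (q_pos (S j)).
    assert (0 < INR (S i)) by (apply lt_0_INR; lia).
    assert (INR (S i) <= INR (S (S j))) by (apply le_INR; lia).
    assert (/ INR (S (S j)) <= / INR (S i)) by (apply Rinv_le_contravar; lra).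
    unfold Rdiv. assert (0 <= poisson1_pmf i * poisson1_pmf (S j)) by nra. nra.
Qed.

Lemma q_fstar : forall k, fstar poisson1_pmf k = poisson1_pmf k.
Proof.
  intro k. unfold fstar. rewrite q_S, S_INR. assert (0 <= INR k) by apply pos_INR.
  field. lra.
Qed.

Lemma d0_NLC : NLC d0.
Proof.
  assert (Hn : forall k, 0 <= d0 k) by (intro k; unfold d0; destruct (Nat.eqb k 0); lra).
  split; [exact Hn|]. intros i j _. change (d0 (S j)) with 0.
  pose proof (Hn i); pose proof (Hn j); pose proof (prev_nonneg d0 Hn i). nra.
Qed.

Lemma d0_fstar : forall k, fstar d0 k = 0.
Proof. intro k. unfold fstar. change (d0 (S k)) with 0. ring. Qed.

Lemma sum_single : forall F n, (forall j, (0 < j)%nat -> F j = 0) -> sum_f_R0 F n = F 0%nat.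
Proof. intros F n H. induction n; simpl; [reflexivity|]. rewrite IHn, (H (S n)); [ring|lia]. Qed.

Lemma sum_lin : forall F G a b n,
  sum_f_R0 (fun j => a * F j + b * G j) n = a * sum_f_R0 F n + b * sum_f_R0 G n.
Proof. intros. induction n; simpl; [ring|]. rewrite IHn. ring. Qed.

Lemma conv_prev : forall (a : nat -> R) k,
  sum_f_R0 (fun j => prev a j * poisson1_pmf (k - j)) k =
  prev (fun k0 => sum_f_R0 (fun j => a j * poisson1_pmf (k0 - j)) k0) k.
Proof.
  intros a k. destruct k as [|k].
  - simpl. ring.
  - rewrite decomp_sum by lia. simpl prev. simpl pred. rewrite Rmult_0_l, Rplus_0_l.
    apply sum_eq. intros i _. simpl. reflexivity.
Qed.

Lemma conv_gen : forall ps k,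
  sum_f_R0 (fun j => gen ps d0 j * poisson1_pmf (k - j)) k = gen ps poisson1_pmf k.
Proof.
  induction ps as [|p ps IH]; intro k.
  - simpl. rewrite sum_single.
    + unfold d0. simpl. rewrite Nat.sub_0_r. ring.
    + intros j Hj. destruct j; [lia|]. unfold d0. simpl. ring.
  - cbn [gen].
    rewrite (sum_eq _ (fun j => (1-p) * (gen ps d0 j * poisson1_pmf (k - j)) + p * (prev (gen ps d0) j * poisson1_pmf (k - j)))).
    2:{ intros i _. unfold step. ring. }
    rewrite sum_lin, conv_prev, IH. unfold step. f_equal. f_equal.
    destruct k; simpl; [reflexivity| apply IH].
Qed.

Lemma conv_eq : forall ps k,
  conv_pmf (bern_sum_pmf ps) poisson1_pmf k = gen ps poisson1_pmf k.
Proof.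
  intros ps k. unfold conv_pmf. rewrite <- conv_gen. apply sum_eq. intros i _. rewrite bern_gen. reflexivity.
Qed.

Theorem proposition1 (ps : list R)
  (hps : Forall (fun p => 0 <= p <= 1) ps)
  (m0 m1 : nat)
  (hm1 : is_mode (conv_pmf (bern_sum_pmf ps) poisson1_pmf) m1)
  (huniq : forall m : nat,
      is_mode (conv_pmf (bern_sum_pmf ps) poisson1_pmf) m -> m = m1)
  (hm0 : is_mode (bern_sum_pmf ps) m0) :
  (m0 <= m1 <= m0 + 2)%nat.
Proof.
  assert (Hb : Forall bnd ps) by exact hps.
  set (b := gen ps d0). set (c := gen ps poisson1_pmf).
  assert (Hm0 : forall k, b k <= b m0).
  { intro k. unfold b. rewrite <- !bern_gen. apply hm0. }
  assert (Hm1 : forall k, c k <= c m1).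
  { intro k. unfold c. rewrite <- !conv_eq. apply hm1. }
  assert (Hu : forall m, (forall k, c k <= c m) -> m = m1).
  { intros m H. apply huniq. intro k. rewrite !conv_eq. apply H. }
  assert (bN : NLC b) by (apply gen_NLC; [exact Hb| exact d0_NLC]).
  assert (cN : NLC c) by (apply gen_NLC; [exact Hb| exact q_NLC]).
  destruct bN as [bn bl]. destruct cN as [cn cl].
  assert (bpos : 0 < b m0).
  { destruct (pos_exists ps d0 Hb (proj1 d0_NLC)) as [k Hk].
    - exists 0%nat. unfold d0. simpl. lra.
    - pose proof (Hm0 k). fold b in Hk. lra. }
  assert (hmu : mu ps = mu ps) by reflexivity.
  assert (cs1 : c (S m1) < c m1).
  { destruct (Rlt_dec (c (S m1)) (c m1)) as [H|H]; [exact H|].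
    assert (S m1 = m1); [|lia]. apply Hu. intro k. pose proof (Hm1 k). lra. }
  assert (cpos : 0 < c m1) by (pose proof (cn (S m1)); lra).
  assert (TU : mu ps < INR m1).
  { pose proof (upper_gen ps poisson1_pmf m1 Hb q_NLC ltac:(fold c; lra)) as U.
    fold c in U. rewrite (gen_ext ps _ _ q_fstar) in U. fold c in U.
    assert (0 < c (S m1)).
    { apply (prop_pos ps poisson1_pmf Hb (proj1 q_NLC)); [intros; apply q_pos| exact cpos]. }
    nra. }
  assert (SU : mu ps <= INR m0 + 1).
  { pose proof (upper_gen ps d0 m0 Hb d0_NLC (Hm0 (S m0))) as U.
    fold b in U. rewrite (gen_ext ps _ _ d0_fstar), gen_zero in U.
    destruct (Rlt_dec 0 (b (S m0))) as [H|H].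
    - nra.
    - assert (b (S m0) = 0) by (pose proof (bn (S m0)); lra).
      pose proof (Z2 ps d0 Hb (proj1 d0_NLC) m0 H0 bpos).
      pose proof (mu_le_countpos ps Hb). apply le_INR in H1. lra. }
  split.
  -
    destruct m0 as [|m]; [lia|].
    assert (SL : INR m <= mu ps).
    { pose proof (lower_gen ps d0 m Hb d0_NLC (Hm0 m)) as L. fold b in L.
      assert (prev (gen ps (fstar d0)) m = 0).
      { destruct m; simpl; [reflexivity|]. rewrite (gen_ext ps _ _ d0_fstar). apply gen_zero. }
      rewrite H in L.
      destruct (Rlt_dec 0 (b m)) as [H1|H1].
      - nra.
      - assert (b m = 0) by (pose proof (bn m); lra).
        assert (Hz : forall k, d0 k = 0 -> d0 (S k) <= 0) by (intros; unfold d0; simpl; lra).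
        pose proof (Z1 ps d0 Hb (proj1 d0_NLC) Hz m H0 bpos).
        pose proof (count1_le_mu ps Hb). apply lt_INR in H2. lra. }
    assert (INR m < INR m1) by lra. apply INR_lt in H. lia.
  - destruct m1 as [|m]; [lia|].
    assert (cs2 : c m < c (S m)).
    { destruct (Rlt_dec (c m) (c (S m))) as [H|H]; [exact H|].
      assert (m = S m); [|lia]. apply Hu. intro k. pose proof (Hm1 k). lra. }
    assert (TL : INR m - 1 < mu ps).
    { pose proof (lower_gen ps poisson1_pmf m Hb q_NLC ltac:(fold c; lra)) as L. fold c in L.
      assert (prev (gen ps (fstar poisson1_pmf)) m = prev c m).
      { destruct m; simpl; [reflexivity| apply gen_ext; exact q_fstar]. }
      rewrite H in L.
      destruct (Rlt_dec 0 (c m)) as [H1|H1].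
      + assert (prev c m < c m).
        { destruct (Rlt_dec (prev c m) (c m)) as [H2|H2]; [exact H2|].
          pose proof (cl m m (le_n m)). nra. }
        nra.
      + assert (c m = 0) by (pose proof (cn m); lra).
        assert (Hz : forall k, poisson1_pmf k = 0 -> poisson1_pmf (S k) <= 0)
          by (intros k Hk; pose proof (q_pos k); lra).
        pose proof (Z1 ps poisson1_pmf Hb (proj1 q_NLC) Hz m H0 ltac:(fold c; lra)).
        pose proof (count1_le_mu ps Hb). apply lt_INR in H2. lra. }
    assert (INR m < INR m0 + 2) by lra.
    replace (INR m0 + 2) with (INR (m0 + 2)) in H by (rewrite plus_INR; simpl; ring).
    apply INR_lt in H. lia.
Qed.
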